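(* Let $G=(V,E)$ be a finite simple undirected graph with a coloring $\mathcal{C}$ whose vertex color classes are $V_1,\dots,V_r$. Suppose that $(V_{\eta_1},\dots,V_{\eta_r})$, for some $\eta\in\mathfrak{S}_r$, is a color perfect elimination ordering. Write $n_i=|V_{\eta_i}|$, $N_i=\sum_{k\in[i]}n_k$, $N_0=0$, and relabel the vertices so that $V_{\eta_i}=\{N_{i-1}+1,\dots,N_i\}$ for each $i\in[r]$; define $\mathcal{Z}_G^{\mathcal{C}}$ with respect to this vertex numbering, and consider block decompositions with respect to the partition $(n_1,\dots,n_r)$ of $p=|V|$. (i) If $(G,\mathcal{C})$ is CER with respect to the ordering $(V_{\eta_1},\dots,V_{\eta_r})$, then $\mathcal{Z}_G^{\mathcal{C}}$ is a BC-space. (ii) If $(G,\mathcal{C})$ is symmetric CER with respect to the ordering $(V_{\eta_1},\dots,V_{\eta_r})$, then $\mathcal{Z}_G^{\mathcal{C}}$ is a cBC-space.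
   Context: Colored graphs: $G=(V,E)$ is a finite simple undirected graph, $V=[p]$. A coloring $\mathcal{C}$ of $G$ consists of a partition of $V$ into nonempty vertex color classes $V_1,\dots,V_r$ and a partition of $E$ into edge color classes $E_{r+1},\dots,E_{r+R}$. The extended edge set is $\tilde E=E\cup\{\{v\}:v\in V\}$; put $E_i=\{\{v\}:v\in V_i\}$ for $i\in[r]$, so $\{E_1,\dots,E_{r+R}\}$ partitions $\tilde E$. Define $c(v,w)=k$ iff $\{v,w\}\in E_k$ (for $\{v,w\}\in\tilde E$), $c(v):=c(v,v)$ (so $c(v)=i$ iff $v\in V_i$), and $c(v,w)=0$ if $v\ne w$ and $\{v,w\}\notin E$. Orderings: for an ordered partition $(V_{\eta_1},\dots,V_{\eta_r})$, $\eta\in\mathfrak{S}_r$, let $\pi(v)=i$ iff $v\in V_{\eta_i}$ and $V_{\le i}=V_{\eta_1}\cup\dots\cup V_{\eta_i}$. It is a color perfect elimination ordering (cpeo) if for every $i\in[r]$ every $v\in V_{\eta_i}$ is simplicial (its neighbours form a clique) in the induced subgraph $G[V_{\eta_i}\cup\dots\cup V_{\eta_r}]$. For $\{v,w\}\in\tilde E$ and $k,h\in[r+R]$ set $m_{v\to w}(k,h)=|\{u\in V_{\le \min(\pi(v),\pi(w))}: c(v,u)=k,\ c(u,w)=h\}|$ and $m_{v\leftrightarrow w}(k,h)=m_{v\to w}(k,h)+m_{v\to w}(h,k)$. Let $F_i=\{c(v,w):\{v,w\}\in\tilde E,\ c(v)=c(w)=i\}$ and $F=\bigcup_{i}F_i$.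 (M1): for all $\{v,w\},\{v',w'\}\in\tilde E$, $c(v,w)=c(v',w')$ implies $m_{v\leftrightarrow w}=m_{v'\leftrightarrow w'}$ (as functions on $[r+R]^2$). (M2): for all $v,w\in V$ with $c(v)=c(w)$, $m_{v\to w}(k,h)=m_{w\to v}(k,h)$ for all $k,h\in F$. $(G,\mathcal{C})$ is CER with respect to an ordering if the ordering is a cpeo and (M1) holds for it; symmetric CER if in addition (M2) holds for it. Matrix spaces: $\mathcal{Z}_G=\{x\in\mathrm{Sym}(p): x_{ij}=0$ whenever $i\ne j$ and $\{i,j\}\notin E\}$ and $\mathcal{Z}_G^{\mathcal{C}}=\{x\in\mathcal{Z}_G: x_{ij}=x_{kl}$ whenever $\{i,j\},\{k,l\}\in\tilde E$ and $c(i,j)=c(k,l)\}$. BC-spaces: given an ordered partition $(n_1,\dots,n_r)$ of $p$, write $x\in\mathrm{Sym}(p)$ in blocks $X_{kh}\in\mathbb{R}^{n_k\times n_h}$. $\mathrm{BlockTri}(x)$ keeps the blocks $X_{kh}$ with $k\ge h$ and sets the others to zero; $\mathrm{BlockDiag}(x)$ keeps only the blocks $X_{kk}$. For a linear subspace $\mathcal{Z}\subset\mathrm{Sym}(p)$: $M_i(\mathcal{Z})=\{x\in\mathcal{Z}: X_{kh}=0$ unless $(k,h)=(i,i)\}$, $L_i(\mathcal{Z})=\{x\in\mathcal{Z}: X_{kh}=0$ unless $k>h=i$ or $h>k=i\}$. $\mathcal{Z}$ is a BC-space if (Z0) $I_p\in\mathcal{Z}$ and $\mathcal{Z}=(\bigoplus_{i\in[r]}M_i(\mathcal{Z}))\oplus(\bigoplus_{i\in[r-1]}L_i(\mathcal{Z}))$,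 and (Z1) $\mathrm{BlockTri}(x)\mathrm{BlockTri}(x)^\top\in\mathcal{Z}$ for all $x\in\mathcal{Z}$. It is a cBC-space if moreover (Z2) $\mathrm{BlockDiag}(x)\mathrm{BlockDiag}(y)\in\mathcal{Z}$ for all $x,y\in\mathcal{Z}$. *)

(* Defs.v *)
From mathcomp Require Import all_boot all_order all_algebra all_fingroup.
Set Implicit Arguments. Unset Strict Implicit. Unset Printing Implicit Defensive.
Import GRing.Theory Num.Theory.


Section ColoredGraph.
Variables (p r R : nat).
Variable e : rel 'I_p.
(* vertex colors 0..r-1 (paper: 1..r), edge colors 0..R-1 (paper: r+1..r+R) *)
Variable vc : 'I_p -> 'I_r.
Variable ec : 'I_p -> 'I_p -> 'I_R.

Definition is_colored_graph : Prop :=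
  [/\ symmetric e, irreflexive e,
      (forall i : 'I_r, exists v, vc v = i),
      (forall v w, e v w -> ec v w = ec w v) &
      (forall k : 'I_R, exists v w, e v w /\ ec v w = k)].

Definition inEt (v w : 'I_p) : bool := (v == w) || e v w.

(* c(v,w) with the paper's numbering: vertex colors 1..r, edge colors
   r+1..r+R, and 0 for distinct nonadjacent vertices. *)
Definition col (v w : 'I_p) : nat :=
  if v == w then (vc v).+1 else if e v w then r + (ec v w).+1 else 0.

Variable eta : {perm 'I_r}.
(* pi(v) = i iff v in V_{eta_i}  (0-based positions) *)
Definition pos (v : 'I_p) : 'I_r := (eta^-1)%g (vc v).

Definition cpeo : Prop :=
  forall v u w : 'I_p, pos v <= pos u -> pos v <= pos w ->
    e v u -> e v w -> u != w -> e u w.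

Definition mcount (v w : 'I_p) (k h : nat) : nat :=
  #|[set u : 'I_p | [&& (pos u <= minn (pos v) (pos w))%N,
                        col v u == k & col u w == h]]|.

Definition mcount2 v w k h := (mcount v w k h + mcount v w h k)%N.

Definition M1 : Prop :=
  forall v w v' w', inEt v w -> inEt v' w' -> col v w = col v' w' ->
    forall k h : nat, (0 < k <= r + R)%N -> (0 < h <= r + R)%N ->
      mcount2 v w k h = mcount2 v' w' k h.

Definition inF (k : nat) : Prop :=
  exists v w, inEt v w /\ vc v = vc w /\ col v w = k.

Definition M2 : Prop :=
  forall v w : 'I_p, vc v = vc w ->
    forall k h, inF k -> inF h -> mcount v w k h = mcount w v k h.

Definition CER : Prop := cpeo /\ M1.
Definition symCER : Prop := [/\ cpeo, M1 & M2].

(* block sizes n_i = |V_{eta_i}| (0-based i; 0 for i >= r) *)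
Definition nsz (i : nat) : nat := #|[set v : 'I_p | (pos v : nat) == i]|.
Definition Nsum (i : nat) : nat := \sum_(k < i) nsz k.

(* sigma relabels vertex v as sigma v, so that V_{eta_i} becomes the
   contiguous block {N_{i-1}, ..., N_i - 1} (0-based). *)
Definition good_relabeling (sigma : {perm 'I_p}) : Prop :=
  forall v, (Nsum (pos v) <= sigma v < Nsum (pos v).+1)%N.

Definition ZGC (F : fieldType) (sigma : {perm 'I_p}) (x : 'M[F]_p) : Prop :=
  [/\ (x^T)%R = x,
      (forall v w, v != w -> ~~ e v w -> x (sigma v) (sigma w) = 0%R) &
      (forall v w v' w', inEt v w -> inEt v' w' -> col v w = col v' w' ->
         x (sigma v) (sigma w) = x (sigma v') (sigma w'))].

End ColoredGraph.

Section BC.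
Variables (F : fieldType) (p r : nat).
Variable n : nat -> nat.
Definition bsum (i : nat) : nat := \sum_(k < i) n k.
(* index (0-based) of the block containing row/column a *)
Definition blk (a : 'I_p) : nat := #|[set i : 'I_r | (bsum i.+1 <= a)%N]|.

Definition BlockTri (x : 'M[F]_p) : 'M[F]_p :=
  \matrix_(a, b) (if (blk b <= blk a)%N then x a b else 0%R).
Definition BlockDiag (x : 'M[F]_p) : 'M[F]_p :=
  \matrix_(a, b) (if blk a == blk b then x a b else 0%R).

Variable Z : 'M[F]_p -> Prop.

Definition Mi (i : nat) (x : 'M[F]_p) : Prop :=
  Z x /\ forall a b, ~ (blk a = i /\ blk b = i) -> x a b = 0%R.
Definition Li (i : nat) (x : 'M[F]_p) : Prop :=
  Z x /\ forall a b,
    ~ ((blk b < blk a /\ blk b = i) \/ (blk a < blk b /\ blk a = i))%N ->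
    x a b = 0%R.

(* (Z0): I in Z and Z = (+)_{i in [r]} M_i(Z) (+) (+)_{i in [r-1]} L_i(Z) *)
Definition Z0 : Prop :=
  [/\ Z 1%:M%R,
      (forall x, Z x -> exists (m l : 'I_r -> 'M[F]_p),
          [/\ forall i : 'I_r, Mi i (m i), forall i : 'I_r, Li i (l i) &
              x = (\sum_i m i + \sum_(i : 'I_r | (i.+1 < r)%N) l i)%R]),
      (forall (m l : 'I_r -> 'M[F]_p), (forall i : 'I_r, Mi i (m i)) ->
          (forall i : 'I_r, Li i (l i)) ->
          Z (\sum_i m i + \sum_(i : 'I_r | (i.+1 < r)%N) l i)%R) &
      (forall (m l : 'I_r -> 'M[F]_p), (forall i : 'I_r, Mi i (m i)) ->
          (forall i : 'I_r, Li i (l i)) ->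
          (\sum_i m i + \sum_(i : 'I_r | (i.+1 < r)%N) l i = 0)%R ->
          (forall i : 'I_r, m i = 0%R) /\ (forall i : 'I_r, (i.+1 < r)%N -> l i = 0%R))].

Definition Z1 : Prop :=
  forall x, Z x -> Z (BlockTri x *m (BlockTri x)^T)%R.
Definition Z2 : Prop :=
  forall x y, Z x -> Z y -> Z (BlockDiag x *m BlockDiag y)%R.

Definition BC_space : Prop := Z0 /\ Z1.
Definition cBC_space : Prop := [/\ Z0, Z1 & Z2].
End BC.

(* Main.v *)
Require Import Defs.
From mathcomp Require Import all_boot all_order all_algebra all_fingroup.
From mathcomp Require Import zify.
Set Implicit Arguments. Unset Strict Implicit. Unset Printing Implicit Defensive.
Import GRing.Theory Num.Theory.

Section Proof.
Variables (F : realFieldType) (p r R : nat) (e : rel 'I_p)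
  (vc : 'I_p -> 'I_r) (ec : 'I_p -> 'I_p -> 'I_R)
  (eta : {perm 'I_r}) (sigma : {perm 'I_p}).
Hypothesis Hcg : is_colored_graph e vc ec.
Hypothesis Hgood : good_relabeling vc eta sigma.

Local Notation pos := (Defs.pos vc eta).
Local Notation col := (Defs.col e vc ec).
Local Notation blk := (Defs.blk r (nsz vc eta)).

Lemma bsum_mono n i j : i <= j -> bsum n i <= bsum n j.
Proof.
move=> ij; rewrite /bsum -!(big_mkord xpredT) [X in _ <= X](@big_cat_nat _ _ _ i) //=.
exact: leq_addr.
Qed.

Lemma card_lt_ord k : k <= r -> #|[set i : 'I_r | i < k]| = k.
Proof.
move=> kr.
have -> : [set i : 'I_r | i < k] = widen_ord kr @: [set: 'I_k].
  apply/setP => i; rewrite inE; apply/idP/imsetP.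
    by move=> ik; exists (Ordinal ik) => //; apply: val_inj.
  by case=> j _ ->; rewrite /= ltn_ord.
rewrite card_imset ?cardsT ?card_ord //.
by move=> a b /(congr1 val) /= ab; apply: val_inj.
Qed.

Lemma blk_sigma v : blk (sigma v) = pos v.
Proof.
rewrite /blk.
have -> : [set i : 'I_r | bsum (nsz vc eta) i.+1 <= sigma v] = [set i : 'I_r | i < pos v].
  apply/setP => i; rewrite !inE.
  have /andP [h1 h2] := Hgood v.
  case: (ltnP i (pos v)) => ip.
    apply: leq_trans h1; exact: bsum_mono.
  apply/negbTE; rewrite -ltnNge; apply: (leq_trans h2); apply: bsum_mono; by [].
by rewrite card_lt_ord // ltnW.
Qed.

Lemma pos_eq v w : (pos v == pos w) = (vc v == vc w).
Proof. by rewrite /Defs.pos (inj_eq (@perm_inj _ _)). Qed.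

Lemma col_sym v w : col v w = col w v.
Proof.
case: Hcg => esym _ _ ecsym _.
rewrite /Defs.col eq_sym esym; case: eqP => [->//|_].
by case E: (e w v) => //; rewrite ecsym // esym.
Qed.

Lemma col_le v w : col v w <= r + R.
Proof.
rewrite /Defs.col; case: eqP => _; first by have := ltn_ord (vc v); lia.
case: (e v w) => //; have := ltn_ord (ec v w); lia.
Qed.

Lemma col_pos v w : inEt e v w -> 0 < col v w.
Proof. rewrite /inEt /Defs.col; case: eqP => //= _; case: (e v w) => //= _; lia. Qed.

Lemma col0 v w : ~~ inEt e v w -> col v w = 0.
Proof. rewrite /inEt /Defs.col; case: eqP => //= _; by case: (e v w). Qed.

Lemma col_vert v u t : col v u = (vc t).+1 -> u = v /\ vc t = vc v.
Proof.
rewrite /Defs.col; case: eqP => [-> [] H|_]; first by split => //; apply: val_inj.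
case: (e v u) => // H; exfalso; have := ltn_ord (vc t); lia.
Qed.

Local Notation mcount := (mcount e vc ec eta).
Local Notation mcount2 := (mcount2 e vc ec eta).

Lemma mc_left v w t h :
  mcount v w (vc t).+1 h = ((pos v <= pos w) && (vc t == vc v) && (col v w == h)) :> nat.
Proof.
rewrite /Defs.mcount.
have -> : [set u | [&& pos u <= minn (pos v) (pos w), col v u == (vc t).+1 & col u w == h]]
   = [set u | (u == v) && ((pos v <= pos w) && (vc t == vc v) && (col v w == h))].
  apply/setP => u; rewrite !inE.
  case: (u =P v) => [->|nuv] /=.
    rewrite leq_min leqnn /= {1}/Defs.col eqxx eqSS.
    by rewrite (inj_eq val_inj) [vc v == _]eq_sym andbA.
  apply/negbTE; apply/negP => /and3P [_ /eqP /col_vert [] /esym ? _ _]; exact: nuv.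
case: (boolP (_ && _ && _)) => _ /=.
  by rewrite (_ : [set u | _] = [set v]) ?cards1 //; apply/setP => u; rewrite !inE andbT.
by rewrite (_ : [set u | _] = set0) ?cards0 //; apply/setP => u; rewrite !inE andbF.
Qed.

Lemma mc_right v w t h :
  mcount v w h (vc t).+1 = ((pos w <= pos v) && (vc t == vc w) && (col v w == h)) :> nat.
Proof.
rewrite /Defs.mcount.
have -> : [set u | [&& pos u <= minn (pos v) (pos w), col v u == h & col u w == (vc t).+1]]
   = [set u | (u == w) && ((pos w <= pos v) && (vc t == vc w) && (col v w == h))].
  apply/setP => u; rewrite !inE.
  case: (u =P w) => [->|nuw] /=.
    rewrite leq_min leqnn andbT {2}/Defs.col eqxx eqSS.
    rewrite (inj_eq val_inj) [vc w == _]eq_sym; by case: (_ <= _); case: (col v w == h); case: (vc t == vc w).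
  apply/negbTE; apply/negP => /and3P [_ _ /eqP]; rewrite col_sym => /col_vert [] /esym ? _; exact: nuw.
case: (boolP (_ && _ && _)) => _ /=.
  by rewrite (_ : [set u | _] = [set w]) ?cards1 //; apply/setP => u; rewrite !inE andbT.
by rewrite (_ : [set u | _] = set0) ?cards0 //; apply/setP => u; rewrite !inE andbF.
Qed.

Lemma inEt_sym v w : inEt e v w = inEt e w v.
Proof. by case: Hcg => esym _ _ _ _; rewrite /inEt eq_sym esym. Qed.

Lemma vc_pos a b : (vc a == vc b) = (pos a == pos b :> nat).
Proof. by rewrite -pos_eq. Qed.

Lemma KL0 (HM1 : M1 e vc ec eta) v w v' w' :
  inEt e v w -> inEt e v' w' -> col v w = col v' w' ->
  pos v <= pos w -> pos v' <= pos w' ->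
  (pos v == pos w :> nat) = (pos v' == pos w' :> nat) /\ minn (pos v) (pos w) = minn (pos v') (pos w').
Proof.
move=> H1 H2 Hc l1 l2.
have := HM1 v w v' w' H1 H2 Hc (vc v).+1 (col v w) _ _.
rewrite ltn0Sn /= (leq_trans (ltn_ord (vc v)) (leq_addr _ _)) col_pos // col_le.
move=> /(_ isT isT).
rewrite /Defs.mcount2 mc_left mc_right mc_left mc_right -Hc !eqxx !andbT.
rewrite !vc_pos l1 l2 /=.
move: l1 l2; case: (pos v) (pos w) (pos v') (pos w') => [a ?] [b ?] [c ?] [d ?] /=.
move=> l1 l2.
case: (a =P b); case: (a =P c); case: (a =P d); case: (c =P d); case: (leqP b a); case: (leqP d c) => /=; lia.
Qed.

Lemma KL (HM1 : M1 e vc ec eta) v w v' w' :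
  inEt e v w -> inEt e v' w' -> col v w = col v' w' ->
  (pos v == pos w :> nat) = (pos v' == pos w' :> nat) /\ minn (pos v) (pos w) = minn (pos v') (pos w').
Proof.
move=> H1 H2 Hc.
case: (boolP (pos v <= pos w)) => l1; case: (boolP (pos v' <= pos w')) => l2;
  rewrite -?ltnNge in l1 l2.
- exact: (KL0 HM1 H1 H2 Hc l1 l2).
- have [A B] := @KL0 HM1 v w w' v' H1 ltac:(by rewrite inEt_sym) ltac:(by rewrite Hc col_sym) l1 (ltnW l2).
  by split; [rewrite A eq_sym | rewrite B minnC].
- have [A B] := @KL0 HM1 w v v' w' ltac:(by rewrite inEt_sym) H2 ltac:(by rewrite -Hc col_sym) (ltnW l1) l2.
  by split; [rewrite eq_sym A | rewrite minnC B].
- have [A B] := @KL0 HM1 w v w' v' ltac:(by rewrite inEt_sym) ltac:(by rewrite inEt_sym) ltac:(by rewrite col_sym Hc col_sym) (ltnW l1) (ltnW l2).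
  by split; [rewrite eq_sym A eq_sym | rewrite minnC B minnC].
Qed.

Local Open Scope ring_scope.

Definition fcol (x : 'M[F]_p) (k : nat) : F :=
  if [pick ab : 'I_p * 'I_p | inEt e ab.1 ab.2 && (col ab.1 ab.2 == k)] is Some ab
  then x (sigma ab.1) (sigma ab.2) else 0.

Lemma fcol0 x : fcol x 0 = 0.
Proof.
rewrite /fcol; case: pickP => // [[a b]] /andP [/col_pos H /eqP E].
by rewrite E in H.
Qed.

Lemma fcolE x : ZGC e vc ec sigma x -> forall v u, x (sigma v) (sigma u) = fcol x (col v u).
Proof.
case=> _ Hz Hc v u.
case: (boolP (inEt e v u)) => H.
  rewrite /fcol; case: pickP => [[a b] /andP [/= Hab /eqP E]|].
    exact: Hc.
  by move=> /(_ (v, u)); rewrite /= H eqxx.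
rewrite col0 // fcol0; apply: Hz; move: H; rewrite /inEt negb_or => /andP [] //.
Qed.

Lemma sum_pick (K c : nat) (G : nat -> F) : (c < K)%N ->
  \sum_(k < K) (if c == k then G k else 0) = G c.
Proof.
move=> cK; rewrite -big_mkcond /=.
rewrite (eq_bigl (fun k : 'I_K => (k : nat) == c)); last by move=> k; rewrite eq_sym.
by rewrite big_ord1_eq cK.
Qed.

Definition KK := (r + R).+1.

Lemma sum_mcount (f g : nat -> F) v w :
  \sum_u (if (pos u <= minn (pos v) (pos w))%N then f (col v u) * g (col u w) else 0)
  = \sum_(k < KK) \sum_(h < KK) (f k * g h) *+ mcount v w k h.
Proof.
transitivity (\sum_u \sum_(k < KK) \sum_(h < KK)
   (if [&& (pos u <= minn (pos v) (pos w))%N, col v u == k & col u w == h] then f k * g h else 0)).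
  apply: eq_bigr => u _.
  case: ifP => Hp /=; last by rewrite big1 // => k _; rewrite big1.
  apply: esym.
  rewrite (eq_bigr (fun k : 'I_KK => if col v u == k then \sum_(h < KK) (if col u w == h then f k * g h else 0) else 0)); last first.
    by move=> k _; case: eqP => //= _; rewrite big1.
  rewrite (sum_pick (fun k => \sum_(h < KK) (if col u w == h then f k * g h else 0))); last by rewrite /KK ltnS col_le.
  by rewrite (sum_pick (fun h => f (col v u) * g h)) // /KK ltnS col_le.
rewrite exchange_big; apply: eq_bigr => k _.
rewrite exchange_big; apply: eq_bigr => h _.
rewrite -big_mkcond sumr_const /Defs.mcount; congr (_ *+ _).
by rewrite -cardsE.
Qed.

Local Notation ZG := (ZGC e vc ec (F:=F) sigma).
Local Notation f_ x := (fun k => fcol x k).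

Lemma double_sum (a : nat -> nat -> F) v w :
  (forall k h, a k h = a h k) ->
  (\sum_(k < KK) \sum_(h < KK) a k h *+ mcount v w k h) *+ 2
  = \sum_(k < KK) \sum_(h < KK) a k h *+ mcount2 v w k h.
Proof.
move=> asym; rewrite mulr2n.
rewrite [X in _ + X = _]exchange_big /=.
rewrite -big_split; apply: eq_bigr => k _ /=.
rewrite -big_split; apply: eq_bigr => h _ /=.
by rewrite /Defs.mcount2 mulrnDr asym.
Qed.

Lemma M1_sum (HM1 : M1 e vc ec eta) (a : nat -> nat -> F) v w v' w' :
  (forall k h, (k == 0)%N || (h == 0)%N -> a k h = 0) ->
  inEt e v w -> inEt e v' w' -> col v w = col v' w' ->
  \sum_(k < KK) \sum_(h < KK) a k h *+ mcount2 v w k h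
  = \sum_(k < KK) \sum_(h < KK) a k h *+ mcount2 v' w' k h.
Proof.
move=> a0 H1 H2 Hc; apply: eq_bigr => k _; apply: eq_bigr => h _.
case: (boolP (((k : nat) == 0)%N || ((h : nat) == 0)%N)) => kh; first by rewrite a0 // !mul0rn.
rewrite (HM1 v w v' w' H1 H2 Hc k h) //.
- by move: kh (ltn_ord k); rewrite /KK; case: (k : nat) => //= k' _; rewrite ltnS.
- by move: kh (ltn_ord h); rewrite /KK; case: (h : nat); rewrite ?orbT //= => h' _; rewrite ltnS.
Qed.

Lemma nonedge_term (Hcpeo : cpeo e vc eta) v w u :
  v != w -> ~~ e v w -> (pos u <= pos v)%N -> (pos u <= pos w)%N ->
  ~~ (inEt e v u && inEt e u w).
Proof.
move=> nvw nevw l1 l2; apply/negP => /andP [].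
rewrite /inEt; case: (v =P u) => [<-|nvu] /=.
  by rewrite (negbTE nvw) (negbTE nevw).
case: (u =P w) => [->|nuw] /=; first by rewrite (negbTE nevw).
move=> evu euw.
case: Hcg => esym _ _ _ _.
have := Hcpeo u v w l1 l2; rewrite esym => /(_ evu euw nvw).
by rewrite (negbTE nevw).
Qed.

Lemma Z1_entry x : ZG x -> forall v w,
  (BlockTri r (nsz vc eta) x *m (BlockTri r (nsz vc eta) x)^T) (sigma v) (sigma w)
  = \sum_u (if (pos u <= minn (pos v) (pos w))%N then fcol x (col v u) * fcol x (col u w) else 0).
Proof.
move=> Hx v w; rewrite mxE (reindex_inj (@perm_inj _ sigma)) /=.
apply: eq_bigr => u _; rewrite !mxE !blk_sigma leq_min.
rewrite !(fcolE Hx) [col w u]col_sym.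
by case: ifP; case: ifP => //=; rewrite ?mulr0 ?mul0r.
Qed.

Lemma ZG_sym x : ZG x -> forall a b, x a b = x b a.
Proof. by case=> Ht _ _ a b; rewrite -{1}Ht mxE. Qed.

Lemma Z1_holds (HM1 : M1 e vc ec eta) (Hcpeo : cpeo e vc eta) : Z1 r (nsz vc eta) ZG.
Proof.
move=> x Hx; split.
- by rewrite trmx_mul trmxK.
- move=> v w nvw nevw; rewrite Z1_entry //; apply: big1 => u _.
  case: ifP => // Hp; rewrite leq_min in Hp; case/andP: Hp => l1 l2.
  have := nonedge_term Hcpeo nvw nevw l1 l2.
  by case/nandP => /col0 ->; rewrite fcol0 ?mul0r ?mulr0.
- move=> v w v' w' H1 H2 Hc; rewrite !Z1_entry // !sum_mcount.
  apply: (@pmulrnI _ 2) => //.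
  have D := fun a b => @double_sum (fun k h => fcol x k * fcol x h) a b (fun k h => mulrC _ _).
  simpl in D; rewrite !D.
  apply: (@M1_sum HM1 (fun k h => fcol x k * fcol x h)) => // k h /orP [] /eqP ->; by rewrite fcol0 ?mul0r ?mulr0.
Qed.

Definition inFb (k : nat) : bool :=
  [exists ab : 'I_p * 'I_p, [&& inEt e ab.1 ab.2, vc ab.1 == vc ab.2 & col ab.1 ab.2 == k]].

Definition gcol (x : 'M[F]_p) k := if inFb k then fcol x k else 0.

Lemma gcol0 x : gcol x 0 = 0.
Proof. by rewrite /gcol fcol0; case: ifP. Qed.

Lemma gcol_same x a b : pos a = pos b -> gcol x (col a b) = fcol x (col a b).
Proof.
move=> Hab; case: (boolP (inEt e a b)) => H; last by rewrite col0 // gcol0 fcol0.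
rewrite /gcol; case: ifP => //; move/negbT => /existsPn /(_ (a, b)).
by rewrite /= H -pos_eq Hab !eqxx.
Qed.

Lemma gcol_cross (HM1 : M1 e vc ec eta) x a b : pos a != pos b -> gcol x (col a b) = 0.
Proof.
move=> Hab; case: (boolP (inEt e a b)) => H; last by rewrite col0 // gcol0.
rewrite /gcol; case: ifP => // /existsP [[c d] /and3P [/= Hcd Evc /eqP Ec]].
have [A _] := KL HM1 Hcd H Ec.
have Ecd : (pos c == pos d :> nat) by rewrite (inj_eq val_inj) pos_eq.
by move: Hab; rewrite -(inj_eq val_inj) -A Ecd.
Qed.

Lemma mcount_swap v w k h : mcount w v k h = mcount v w h k.
Proof.
rewrite /Defs.mcount minnC; apply: eq_card => u; rewrite !inE.
rewrite [col w u]col_sym [col u v]col_sym; case: (_ <= _)%N => //=; by rewrite andbC.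
Qed.

Lemma M2sym (HM2 : M2 e vc ec eta) v w k h : vc v = vc w -> inFb k -> inFb h ->
  mcount v w k h = mcount v w h k.
Proof.
move=> Hvw Hk Hh; rewrite -mcount_swap; apply: HM2 => //.
- move: Hh => /existsP [[a b] /and3P [/= H1 /eqP H2 /eqP H3]]; exists a, b; by split => //; split.
- move: Hk => /existsP [[a b] /and3P [/= H1 /eqP H2 /eqP H3]]; exists a, b; by split => //; split.
Qed.

Lemma double_sum2 (a : nat -> nat -> F) v w :
  (forall k h, a k h *+ mcount v w k h = a k h *+ mcount v w h k) ->
  (\sum_(k < KK) \sum_(h < KK) a k h *+ mcount v w k h) *+ 2
  = \sum_(k < KK) \sum_(h < KK) a k h *+ mcount2 v w k h.
Proof.
move=> asym; rewrite mulr2n.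
rewrite -big_split; apply: eq_bigr => k _ /=.
rewrite -big_split; apply: eq_bigr => h _ /=.
by rewrite /Defs.mcount2 mulrnDr {2}asym.
Qed.

Local Notation BD := (BlockDiag r (nsz vc eta)).

Lemma Z2_raw x z : ZG x -> ZG z -> forall v w,
  (BD x *m BD z) (sigma v) (sigma w)
  = \sum_u (if (pos v == pos u :> nat) && (pos u == pos w :> nat) then fcol x (col v u) * fcol z (col u w) else 0).
Proof.
move=> Hx Hz v w; rewrite mxE (reindex_inj (@perm_inj _ sigma)) /=.
apply: eq_bigr => u _; rewrite !mxE !blk_sigma.
rewrite (fcolE Hx) (fcolE Hz).
by case: eqP; case: eqP => //= _ _; rewrite ?mulr0 ?mul0r.
Qed.

Lemma Z2_diff x z : ZG x -> ZG z -> forall v w, pos v != pos w ->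
  (BD x *m BD z) (sigma v) (sigma w) = 0.
Proof.
move=> Hx Hz v w H; rewrite Z2_raw //; apply: big1 => u _.
case: ifP => // /andP [/eqP E1 /eqP E2]; exfalso; apply: (negP H); apply/eqP/val_inj; by rewrite /= E1 E2.
Qed.

Lemma Z2_same (HM1 : M1 e vc ec eta) x z : ZG x -> ZG z -> forall v w, pos v = pos w ->
  (BD x *m BD z) (sigma v) (sigma w)
  = \sum_(k < KK) \sum_(h < KK) (gcol x k * gcol z h) *+ mcount v w k h.
Proof.
move=> Hx Hz v w E; rewrite Z2_raw // -sum_mcount; apply: eq_bigr => u _.
case: (boolP (pos v == pos u :> nat)) => Hvu /=.
  have Evu : pos v = pos u by apply: val_inj; apply/eqP.
  have Euw : pos u = pos w by rewrite -Evu.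
  rewrite Euw eqxx -E Evu minnn leqnn.
  by rewrite gcol_same // gcol_same.
case: ifP => // _.
by rewrite gcol_cross ?mul0r // -(inj_eq val_inj).
Qed.

Lemma BD_tr x : ZG x -> (BD x)^T = BD x.
Proof. by move=> Hx; apply/matrixP => a b; rewrite !mxE eq_sym (ZG_sym Hx). Qed.

Lemma gsym (HM2 : M2 e vc ec eta) x z v w : vc v = vc w -> forall k h,
  gcol x k * gcol z h *+ mcount v w k h = gcol x k * gcol z h *+ mcount v w h k.
Proof.
move=> Hvw k h.
case: (boolP (inFb k)) => Hk; last by rewrite /gcol (negbTE Hk) !mul0r !mul0rn.
case: (boolP (inFb h)) => Hh; last by rewrite /gcol (negbTE Hh) !mulr0 !mul0rn.
by rewrite (M2sym HM2 Hvw Hk Hh).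
Qed.

Lemma Z2_holds (HM1 : M1 e vc ec eta) (HM2 : M2 e vc ec eta) (Hcpeo : cpeo e vc eta) :
  Z2 r (nsz vc eta) ZG.
Proof.
move=> x z Hx Hz; split.
- rewrite trmx_mul !BD_tr //; apply/matrixP => a b.
  rewrite -(permKV sigma a) -(permKV sigma b).
  set v := (sigma^-1)%g a; set w := (sigma^-1)%g b.
  case: (boolP (pos v == pos w)) => E; last by rewrite !Z2_diff.
  have E' : pos v = pos w by apply/eqP.
  have Evw : vc v = vc w by apply/eqP; rewrite -pos_eq.
  rewrite !Z2_same //.
  rewrite [RHS](eq_bigr (fun k : 'I_KK => \sum_(h < KK) gcol x k * gcol z h *+ mcount v w h k)); last first.
    by move=> k _; apply: eq_bigr => h _; apply: gsym.
  rewrite exchange_big; apply: eq_bigr => k _; apply: eq_bigr => h _.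
  by rewrite mulrC.
- move=> v w nvw nevw.
  case: (boolP (pos v == pos w)) => E; last by rewrite Z2_diff.
  rewrite Z2_raw //; apply: big1 => u _.
  case: ifP => // /andP [/eqP E1 /eqP E2].
  have l1 : (pos u <= pos v)%N by rewrite E1.
  have l2 : (pos u <= pos w)%N by rewrite -E2.
  have := nonedge_term Hcpeo nvw nevw l1 l2.
  by case/nandP => /col0 ->; rewrite fcol0 ?mul0r ?mulr0.
- move=> v w v' w' H1 H2 Hc.
  have [A _] := KL HM1 H1 H2 Hc.
  case: (boolP (pos v == pos w)) => E; last first.
    rewrite !Z2_diff //; by rewrite -(inj_eq val_inj) -A (inj_eq val_inj).
  have E' : pos v' == pos w' by rewrite -(inj_eq val_inj) -A (inj_eq val_inj).
  rewrite !Z2_same //; try exact/eqP.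
  apply: (@pmulrnI _ 2) => //.
  have Evw : vc v = vc w by apply/eqP; rewrite -pos_eq.
  have Evw' : vc v' = vc w' by apply/eqP; rewrite -pos_eq.
  rewrite (double_sum2 (gsym HM2 x z Evw)) (double_sum2 (gsym HM2 x z Evw')).
  apply: (@M1_sum HM1 (fun k h => gcol x k * gcol z h)) => // k h /orP [] /eqP ->;
    by rewrite gcol0 ?mul0r ?mulr0.
Qed.

Local Notation nn := (nsz vc eta).

Lemma col_vertex v w : inEt e v w -> (v == w) = (col v w <= r)%N.
Proof.
rewrite /inEt /Defs.col; case: eqP => [_ _|_ /= ->]; first by rewrite ltn_ord.
apply/esym/negbTE/negP => H; lia.
Qed.

Lemma ZG1 : ZG 1%:M.
Proof.
split.
- exact: tr_scalar_mx.
- by move=> v w nvw _; rewrite mxE (inj_eq (@perm_inj _ sigma)) (negbTE nvw).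
- move=> v w v' w' H1 H2 Hc; rewrite !mxE !(inj_eq (@perm_inj _ sigma)).
  by rewrite (col_vertex H1) (col_vertex H2) Hc.
Qed.

Lemma ZG0 : ZG 0.
Proof. by split; [rewrite trmx0 | move=> *; rewrite mxE | move=> *; rewrite !mxE]. Qed.

Lemma ZGD x y : ZG x -> ZG y -> ZG (x + y).
Proof.
case=> Tx Zx Cx [Ty Zy Cy]; split.
- by rewrite linearD /= Tx Ty.
- by move=> v w H1 H2; rewrite mxE Zx // Zy // addr0.
- by move=> v w v' w' H1 H2 Hc; rewrite !mxE (Cx _ _ _ _ H1 H2 Hc) (Cy _ _ _ _ H1 H2 Hc).
Qed.

Lemma ZG_sum (I : finType) (P : pred I) (f : I -> 'M[F]_p) :
  (forall i, P i -> ZG (f i)) -> ZG (\sum_(i | P i) f i).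
Proof.
move=> H; apply: (big_ind ZG) => //; [exact: ZG0 | exact: ZGD].
Qed.

Definition restr (q : bool -> nat -> bool) (x : 'M[F]_p) : 'M[F]_p :=
  \matrix_(a, b) if q (blk a == blk b) (minn (blk a) (blk b)) then x a b else 0.

Lemma restr_ZG (HM1 : M1 e vc ec eta) q x : ZG x -> ZG (restr q x).
Proof.
move=> Hx; case: (Hx) => Tx Zx Cx; split.
- by apply/matrixP => a b; rewrite !mxE eq_sym minnC (ZG_sym Hx).
- by move=> v w H1 H2; rewrite mxE Zx //; case: ifP.
- move=> v w v' w' H1 H2 Hc; rewrite !mxE !blk_sigma.
  have [A B] := KL HM1 H1 H2 Hc.
  by rewrite A B (Cx _ _ _ _ H1 H2 Hc).
Qed.

Lemma sum_entry_eq (m l : 'I_r -> 'M[F]_p) :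
  (forall i : 'I_r, Mi r nn ZG i (m i)) -> (forall i : 'I_r, Li r nn ZG i (l i)) ->
  forall v w, pos v = pos w ->
  (\sum_i m i + \sum_(i : 'I_r | (i.+1 < r)%N) l i) (sigma v) (sigma w) = m (pos v) (sigma v) (sigma w).
Proof.
move=> Hm Hl v w E; rewrite mxE !summxE.
rewrite (bigD1 (pos v)) //= big1 ?addr0; last first.
  move=> i ne; apply: (Hm i).2; rewrite !blk_sigma -E => [[H _]].
  by move/eqP: ne; apply; apply: val_inj; rewrite /= H.
rewrite [X in _ + X]big1 ?addr0 // => i _; apply: (Hl i).2; rewrite !blk_sigma E.
by rewrite ltnn; case=> [][].
Qed.

Lemma sum_entry_lt (m l : 'I_r -> 'M[F]_p) :
  (forall i : 'I_r, Mi r nn ZG i (m i)) -> (forall i : 'I_r, Li r nn ZG i (l i)) ->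
  forall v w, (pos v < pos w)%N ->
  (\sum_i m i + \sum_(i : 'I_r | (i.+1 < r)%N) l i) (sigma v) (sigma w) = l (pos v) (sigma v) (sigma w).
Proof.
move=> Hm Hl v w E; rewrite mxE !summxE.
rewrite big1 ?add0r; last first.
  move=> i _; apply: (Hm i).2; rewrite !blk_sigma => [[H1 H2]].
  by move: E; rewrite H1 H2 ltnn.
rewrite (bigD1 (pos v)) /=; last exact: (leq_ltn_trans E (ltn_ord _)).
rewrite big1 ?addr0 // => i ne; apply: (Hl i).2; rewrite !blk_sigma.
case=> [[H1 H2]|[H1 H2]]; first by move: E; rewrite ltnNge (ltnW H1).
have Ei : i = pos v by apply: val_inj; rewrite /= H2.
by rewrite Ei eqxx andbF in ne.
Qed.

Lemma sum_entry_gt (m l : 'I_r -> 'M[F]_p) :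
  (forall i : 'I_r, Mi r nn ZG i (m i)) -> (forall i : 'I_r, Li r nn ZG i (l i)) ->
  forall v w, (pos w < pos v)%N ->
  (\sum_i m i + \sum_(i : 'I_r | (i.+1 < r)%N) l i) (sigma v) (sigma w) = l (pos w) (sigma v) (sigma w).
Proof.
move=> Hm Hl v w E; rewrite mxE !summxE.
rewrite big1 ?add0r; last first.
  move=> i _; apply: (Hm i).2; rewrite !blk_sigma => [[H1 H2]].
  by move: E; rewrite H1 H2 ltnn.
rewrite (bigD1 (pos w)) /=; last exact: (leq_ltn_trans E (ltn_ord _)).
rewrite big1 ?addr0 // => i ne; apply: (Hl i).2; rewrite !blk_sigma.
case=> [[H1 H2]|[H1 H2]]; last by move: E; rewrite ltnNge (ltnW H1).
have Ei : i = pos w by apply: val_inj; rewrite /= H2.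
by rewrite Ei eqxx andbF in ne.
Qed.

Lemma Z0_holds (HM1 : M1 e vc ec eta) : Z0 r nn ZG.
Proof.
split.
- exact: ZG1.
- move=> x Hx.
  exists (fun i : 'I_r => restr (fun fl mn => fl && (mn == i)) x),
         (fun i : 'I_r => restr (fun fl mn => ~~ fl && (mn == i)) x).
  have Hm : forall i : 'I_r, Mi r nn ZG i (restr (fun fl mn => fl && (mn == i)) x).
    move=> i; split; first exact: restr_ZG.
    move=> a b H; rewrite mxE; case: ifP => // /andP [/eqP E /eqP M].
    exfalso; apply: H; split; lia.
  have Hl : forall i : 'I_r, Li r nn ZG i (restr (fun fl mn => ~~ fl && (mn == i)) x).
    move=> i; split; first exact: restr_ZG.
    move=> a b H; rewrite mxE; case: ifP => // /andP [/eqP E /eqP M].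
    exfalso; apply: H; lia.
  split => //.
  apply/matrixP => a b; rewrite -(permKV sigma a) -(permKV sigma b).
  set v := (sigma^-1)%g a; set w := (sigma^-1)%g b.
  case: (ltngtP (pos v) (pos w)) => E.
  + rewrite sum_entry_lt // mxE !blk_sigma ifT //; lia.
  + rewrite sum_entry_gt // mxE !blk_sigma ifT //; lia.
  + have E' : pos v = pos w by apply: val_inj.
    rewrite sum_entry_eq // mxE !blk_sigma ifT //; lia.
- move=> m l Hm Hl; apply: ZGD; apply: ZG_sum => i _; [exact: (Hm i).1 | exact: (Hl i).1].
- move=> m l Hm Hl H0; split.
  + move=> i; apply/matrixP => a b; rewrite [RHS]mxE -(permKV sigma a) -(permKV sigma b).
    set v := (sigma^-1)%g a; set w := (sigma^-1)%g b.
    case: (boolP (((pos v : nat) == i) && ((pos w : nat) == i))) => [/andP [/eqP E1 /eqP E2]|N].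
      have E : pos v = pos w by apply: val_inj; rewrite /= E1 E2.
      have Ei : pos v = i by apply: val_inj.
      by have := sum_entry_eq Hm Hl E; rewrite H0 mxE Ei => <-.
    apply: (Hm i).2; rewrite !blk_sigma => [[E1 E2]]; move: N; rewrite E1 E2 !eqxx //.
  + move=> i ir; apply/matrixP => a b; rewrite [RHS]mxE -(permKV sigma a) -(permKV sigma b).
    set v := (sigma^-1)%g a; set w := (sigma^-1)%g b.
    case: (boolP (((pos v : nat) < pos w)%N && ((pos v : nat) == i))) => [/andP [E1 /eqP E2]|N1].
      have Ei : pos v = i by apply: val_inj.
      by have := sum_entry_lt Hm Hl E1; rewrite H0 mxE Ei => <-.
    case: (boolP (((pos w : nat) < pos v)%N && ((pos w : nat) == i))) => [/andP [E1 /eqP E2]|N2].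
      have Ei : pos w = i by apply: val_inj.
      by have := sum_entry_gt Hm Hl E1; rewrite H0 mxE Ei => <-.
    apply: (Hl i).2; rewrite !blk_sigma => [[[E1 E2]|[E1 E2]]].
      by move: N2; rewrite E1 E2 eqxx.
    by move: N1; rewrite E1 E2 eqxx.
Qed.

End Proof.

Theorem theorem4p2 (F : realFieldType) (p r R : nat) (e : rel 'I_p)
  (vc : 'I_p -> 'I_r) (ec : 'I_p -> 'I_p -> 'I_R)
  (eta : {perm 'I_r}) (sigma : {perm 'I_p}) :
  is_colored_graph e vc ec ->
  cpeo e vc eta ->
  good_relabeling vc eta sigma ->
  (CER e vc ec eta ->
     BC_space r (nsz vc eta) (ZGC e vc ec (F:=F) sigma)) /\
  (symCER e vc ec eta ->
     cBC_space r (nsz vc eta) (ZGC e vc ec (F:=F) sigma)).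
Proof.
move=> Hcg Hcpeo Hgood; split.
- case=> _ HM1; split; [exact: Z0_holds | exact: Z1_holds].
- case=> _ HM1 HM2; split; [exact: Z0_holds | exact: Z1_holds | exact: Z2_holds].
Qed.
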